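(* Let $\mathcal{H}$ be a hedgehog and let $k>2$ be an integer. Then the $k$th Order Preserving Set $\mathcal{P}_k$ of $\mathcal{H}$ is singular, i.e. there exists $s\in[0,2\pi)$ with $\mathcal{P}_k'(s)=0$. Moreover, if $\mathcal{P}_k$ has only finitely many singular points (parameters $s\in[0,2\pi)$ with $\mathcal{P}_k'(s)=0$), then their number is divisible by $k$.
   Context: Write $u(s)=(\cos s,\sin s)$, $u'(s)=(-\sin s,\cos s)$. A hedgehog is a closed planar curve determined by a smooth $2\pi$-periodic function $h$ (its support function) via $\mathcal{H}(s)=h(s)u(s)+h'(s)u'(s)$. Its average width is $\overline{w}=\frac1\pi\int_0^{2\pi}h(s)\,ds$. For $(x,y)\in\mathbb{R}^2$ let $(x,y)^\perp=(-y,x)$. The $k$th Order Preserving Set of $\mathcal{H}$ is the curve $\mathcal{P}_k(s)=\frac{1}{k}\sum_{j=1}^{k}\Big(\cos\big(\tfrac{2\pi j}{k}\big)\,\mathcal{H}\big(s+\tfrac{2\pi j}{k}\big)-\sin\big(\tfrac{2\pi j}{k}\big)\,\mathcal{H}\big(s+\tfrac{2\pi j}{k}\big)^{\perp}\Big)-\frac{1}{2}\overline{w}\,u(s)$, $s\in[0,2\pi]$. *)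

(* Defs.v *)
From Stdlib Require Import Reals Lra Lia List.
From Coquelicot Require Import Coquelicot.
Import ListNotations.
Open Scope R_scope.

Definition smooth (h : R -> R) : Prop :=
  forall (n : nat) (x : R), ex_derive (Derive_n h n) x.

Definition periodic_2pi (h : R -> R) : Prop :=
  forall s : R, h (s + 2 * PI) = h s.

(* The hedgehog H(s) = h(s) u(s) + h'(s) u'(s), u(s) = (cos s, sin s). *)
Definition hedgehog_x (h : R -> R) (s : R) : R :=
  h s * cos s + Derive h s * (- sin s).
Definition hedgehog_y (h : R -> R) (s : R) : R :=
  h s * sin s + Derive h s * cos s.

Definition avg_width (h : R -> R) : R := / PI * RInt h 0 (2 * PI).

Definition sum_1_to (k : nat) (f : nat -> R) : R :=
  fold_right Rplus 0 (map f (seq 1 k)).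

Definition theta (k j : nat) : R := 2 * PI * INR j / INR k.

(* k-th Order Preserving Set:
   P_k(s) = 1/k sum_{j=1}^k (cos th_j H(s+th_j) - sin th_j H(s+th_j)^perp)
            - 1/2 wbar u(s),  with (x,y)^perp = (-y, x). *)
Definition OPS_x (h : R -> R) (k : nat) (s : R) : R :=
  / INR k * sum_1_to k (fun j =>
      cos (theta k j) * hedgehog_x h (s + theta k j)
      - sin (theta k j) * (- hedgehog_y h (s + theta k j)))
  - / 2 * avg_width h * cos s.
Definition OPS_y (h : R -> R) (k : nat) (s : R) : R :=
  / INR k * sum_1_to k (fun j =>
      cos (theta k j) * hedgehog_y h (s + theta k j)
      - sin (theta k j) * hedgehog_x h (s + theta k j))
  - / 2 * avg_width h * sin s.

Definition OPS_singular (h : R -> R) (k : nat) (s : R) : Prop :=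
  Derive (OPS_x h k) s = 0 /\ Derive (OPS_y h k) s = 0.

(* Main.v *)
Require Import Defs.
From Stdlib Require Import Reals List Arith Lra Lia.
From Coquelicot Require Import Coquelicot.
Open Scope R_scope.

Section S.
Variable h : R -> R.
Hypothesis Hsmooth : smooth h.
Hypothesis Hper : periodic_2pi h.

Definition h1 := Derive h.
Definition h2 := Derive h1.
Definition rho x := h x + h2 x.

Lemma dh x : is_derive h x (h1 x).
Proof. apply Derive_correct. exact (Hsmooth 0%nat x). Qed.
Lemma dh1 x : is_derive h1 x (h2 x).
Proof. apply Derive_correct. exact (Hsmooth 1%nat x). Qed.
Lemma dh2 x : ex_derive h2 x.
Proof. exact (Hsmooth 2%nat x). Qed.

Lemma d_hx x : is_derive (hedgehog_x h) x (- rho x * sin x).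
Proof.
  unfold hedgehog_x.
  apply (is_derive_ext (fun x => h x * cos x + h1 x * - sin x)); [reflexivity|].
  auto_derive.
  - split; [exists (h1 x); apply dh|split; [exists (h2 x); apply dh1|auto]].
  - change (Derive (fun x => h x) x) with (h1 x); change (Derive (fun x => h1 x) x) with (h2 x).
    unfold rho. ring.
Qed.
Lemma d_hy x : is_derive (hedgehog_y h) x (rho x * cos x).
Proof.
  unfold hedgehog_y.
  apply (is_derive_ext (fun x => h x * sin x + h1 x * cos x)); [reflexivity|].
  auto_derive.
  - split; [exists (h1 x); apply dh|split; [exists (h2 x); apply dh1|auto]].
  - change (Derive (fun x => h x) x) with (h1 x); change (Derive (fun x => h1 x) x) with (h2 x).
    unfold rho. ring.
Qed.
Lemma d_tx t x : is_derive (fun s => cos t * hedgehog_x h (s + t) - sin t * (- hedgehog_y h (s + t))) x (- rho (x + t) * sin x).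
Proof.
  auto_derive.
  - split; [exists (- rho (x+t) * sin (x+t)); apply d_hx|split; [exists (rho (x+t) * cos (x+t)); apply d_hy|auto]].
  - change (Derive (fun x => hedgehog_x h x) (x + t)) with (Derive (hedgehog_x h) (x + t)).
    change (Derive (fun x => hedgehog_y h x) (x + t)) with (Derive (hedgehog_y h) (x + t)).
    rewrite (is_derive_unique _ _ _ (d_hx (x+t))), (is_derive_unique _ _ _ (d_hy (x+t))).
    replace (sin x) with (- (sin t * cos (x + t) - cos t * sin (x + t))).
    + ring.
    + rewrite <- sin_minus. replace (t - (x + t)) with (- x) by ring. rewrite sin_neg. ring.
Qed.

Lemma d_ty t x : is_derive (fun s => cos t * hedgehog_y h (s + t) - sin t * hedgehog_x h (s + t)) x (rho (x + t) * cos x).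
Proof.
  auto_derive.
  - split; [exists (rho (x+t) * cos (x+t)); apply d_hy|split; [exists (- rho (x+t) * sin (x+t)); apply d_hx|auto]].
  - change (Derive (fun x => hedgehog_x h x) (x + t)) with (Derive (hedgehog_x h) (x + t)).
    change (Derive (fun x => hedgehog_y h x) (x + t)) with (Derive (hedgehog_y h) (x + t)).
    rewrite (is_derive_unique _ _ _ (d_hx (x+t))), (is_derive_unique _ _ _ (d_hy (x+t))).
    replace (cos x) with (cos t * cos (x + t) + sin t * sin (x + t)).
    + ring.
    + rewrite <- cos_minus. replace (t - (x + t)) with (- x) by ring. rewrite cos_neg. ring.
Qed.

Definition lsum (L : list nat) (f : nat -> R) := fold_right Rplus 0 (map f L).

Lemma d_sum L (F : nat -> R -> R) dF x :
  (forall j, is_derive (F j) x (dF j)) ->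
  is_derive (fun s => lsum L (fun j => F j s)) x (lsum L dF).
Proof.
  intros HF; induction L as [|a L IH]; unfold lsum in *; simpl.
  - apply (is_derive_const (K:=R_AbsRing) (V:=R_NormedModule) 0).
  - apply (is_derive_plus (F a) (fun s => fold_right Rplus 0 (map (fun j => F j s) L))); auto.
Qed.

Lemma lsum_scal L a f : lsum L (fun j => a * f j) = a * lsum L f.
Proof. induction L; unfold lsum in *; simpl; [ring| rewrite IHL; ring]. Qed.
Lemma lsum_scalr L a f : lsum L (fun j => f j * a) = lsum L f * a.
Proof. induction L; unfold lsum in *; simpl; [ring| rewrite IHL; ring]. Qed.
Lemma lsum_ext L f g : (forall j, In j L -> f j = g j) -> lsum L f = lsum L g.
Proof. induction L; unfold lsum in *; simpl; intros H; auto. rewrite H, IHL; auto. Qed.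
Lemma lsum_app L1 L2 f : lsum (L1 ++ L2) f = lsum L1 f + lsum L2 f.
Proof. induction L1; unfold lsum in *; simpl; [ring| rewrite IHL1; ring]. Qed.

Variable k : nat.
Definition w := avg_width h.
Definition G s := / INR k * lsum (seq 1 k) (fun j => rho (s + theta k j)) - / 2 * w.

Lemma DX s : Derive (OPS_x h k) s = - sin s * G s.
Proof.
  apply is_derive_unique.
  set (SX := fun s => lsum (seq 1 k) (fun j => cos (theta k j) * hedgehog_x h (s + theta k j)
      - sin (theta k j) * (- hedgehog_y h (s + theta k j)))).
  assert (HS : is_derive SX s (lsum (seq 1 k) (fun j => - rho (s + theta k j) * sin s))).
  { apply (d_sum _ (fun j s => cos (theta k j) * hedgehog_x h (s + theta k j)
      - sin (theta k j) * (- hedgehog_y h (s + theta k j)))). intros j; apply d_tx. }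
  apply (is_derive_ext (fun s => / INR k * SX s - / 2 * w * cos s)); [reflexivity|].
  clearbody SX. auto_derive; [exists (lsum (seq 1 k) (fun j => - rho (s + theta k j) * sin s)); exact HS|].
  change (Derive (fun x => SX x) s) with (Derive SX s).
  rewrite (is_derive_unique _ _ _ HS), lsum_scalr. unfold G.
  replace (lsum (seq 1 k) (fun j => - rho (s + theta k j))) with (- lsum (seq 1 k) (fun j => rho (s + theta k j))).
  - ring.
  - transitivity (lsum (seq 1 k) (fun j => -1 * rho (s + theta k j))).
    + rewrite lsum_scal. ring.
    + apply lsum_ext. intros; ring.
Qed.

Lemma DY s : Derive (OPS_y h k) s = cos s * G s.
Proof.
  apply is_derive_unique.
  set (SX := fun s => lsum (seq 1 k) (fun j => cos (theta k j) * hedgehog_y h (s + theta k j)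
      - sin (theta k j) * hedgehog_x h (s + theta k j))).
  assert (HS : is_derive SX s (lsum (seq 1 k) (fun j => rho (s + theta k j) * cos s))).
  { apply (d_sum _ (fun j s => cos (theta k j) * hedgehog_y h (s + theta k j)
      - sin (theta k j) * hedgehog_x h (s + theta k j))). intros j; apply d_ty. }
  apply (is_derive_ext (fun s => / INR k * SX s - / 2 * w * sin s)); [reflexivity|].
  clearbody SX. auto_derive; [exists (lsum (seq 1 k) (fun j => rho (s + theta k j) * cos s)); exact HS|].
  change (Derive (fun x => SX x) s) with (Derive SX s).
  rewrite (is_derive_unique _ _ _ HS), lsum_scalr. unfold G. ring.
Qed.

Lemma sing_iff s : OPS_singular h k s <-> G s = 0.
Proof.
  unfold OPS_singular; rewrite DX, DY; split.
  - intros [H1 H2]. destruct (Req_dec (G s) 0) as [E|E]; auto.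
    exfalso. assert (sin s = 0) by (apply (Rmult_eq_reg_r (G s)); auto; lra).
    assert (cos s = 0) by (apply (Rmult_eq_reg_r (G s)); auto; lra).
    pose proof (sin2_cos2 s). unfold Rsqr in *. nra.
  - intros E; rewrite E; split; ring.
Qed.

Lemma shift_derive (f : R -> R) a x l : is_derive f (x + a) l -> is_derive (fun s => f (s + a)) x l.
Proof.
  intros H. 
  assert (Hs : is_derive (fun s => s + a) x 1).
  { auto_derive; auto; ring. }
  pose proof (is_derive_comp f (fun s => s + a) x l 1 H Hs) as Hc.
  change (scal 1 l) with (scal (one : R_AbsRing) l) in Hc. rewrite scal_one in Hc. exact Hc.
Qed.

Lemma per_deriv f : (forall s, f (s + 2 * PI) = f s) -> (forall x, ex_derive f x) ->
  forall s, Derive f (s + 2 * PI) = Derive f s.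
Proof.
  intros Hf Hd s. symmetry. apply is_derive_unique.
  apply (is_derive_ext (fun s => f (s + 2 * PI))); [intros; apply Hf|].
  apply shift_derive. apply Derive_correct; auto.
Qed.

Lemma h1_per s : h1 (s + 2 * PI) = h1 s.
Proof. apply per_deriv; [exact Hper| intros; exact (Hsmooth 0%nat x)]. Qed.
Lemma h2_per s : h2 (s + 2 * PI) = h2 s.
Proof. apply per_deriv; [exact h1_per| intros; exact (Hsmooth 1%nat x)]. Qed.
Lemma rho_per s : rho (s + 2 * PI) = rho s.
Proof. unfold rho. rewrite Hper, h2_per. auto. Qed.

Hypothesis Hk : (2 < k)%nat.
Definition c := 2 * PI / INR k.
Lemma INRk_pos : 0 < INR k.
Proof. apply lt_0_INR. lia. Qed.
Lemma c_pos : 0 < c.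
Proof. unfold c. pose proof PI_RGT_0. pose proof INRk_pos. apply Rdiv_lt_0_compat; lra. Qed.
Lemma kc : INR k * c = 2 * PI.
Proof. unfold c. pose proof INRk_pos. field. lra. Qed.

Lemma theta_S j : theta k (S j) = theta k j + c.
Proof. unfold theta, c. rewrite S_INR. pose proof INRk_pos. field. lra. Qed.

Lemma lsum_map L g f : lsum (map g L) f = lsum L (fun j => f (g j)).
Proof. unfold lsum. rewrite map_map. auto. Qed.

Lemma G_per s : G (s + c) = G s.
Proof.
  unfold G. f_equal. f_equal.
  transitivity (lsum (seq 1 k) (fun j => rho (s + theta k (S j)))).
  { apply lsum_ext. intros. rewrite theta_S. f_equal. ring. }
  rewrite <- (lsum_map _ S (fun j => rho (s + theta k j))), seq_shift.
  destruct k as [|m] eqn:Ek; [lia|].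
  rewrite seq_S. simpl (seq 1 (S m)). rewrite lsum_app.
  change (lsum (1%nat :: seq 2 m) (fun j => rho (s + theta (S m) j)))
    with (rho (s + theta (S m) 1) + lsum (seq 2 m) (fun j => rho (s + theta (S m) j))).
  unfold lsum at 2; simpl.
  replace (s + theta (S m) (S (S m))) with (s + theta (S m) 1 + 2 * PI).
  - rewrite rho_per. ring.
  - unfold theta. rewrite (S_INR (S m)).
    assert (0 < INR (S m)) by (apply lt_0_INR; lia). simpl (INR 1). field. lra.
Qed.

Lemma G_perm m s : G (s + INR m * c) = G s.
Proof.
  induction m.
  - f_equal; simpl; ring.
  - rewrite S_INR. replace (s + (INR m + 1) * c) with (s + INR m * c + c) by ring.
    rewrite G_per; auto.
Qed.

Lemma deriv_cont (f : R -> R) x l : is_derive f x l -> continuity_pt f x.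
Proof.
  intros H. apply continuity_pt_filterlim. apply (ex_derive_continuous f x). exists l; exact H.
Qed.

Lemma hcont x : continuous h x.
Proof. apply (ex_derive_continuous h x). exact (Hsmooth 0%nat x). Qed.

Definition P x := RInt h 0 x.
Lemma dP x : is_derive P x (h x).
Proof.
  apply (is_derive_RInt h P 0 x); [|apply hcont]. unfold P.
  apply filter_forall. intros b.
  exact (RInt_correct (V:=R_CompleteNormedModule) h 0 b (ex_RInt_continuous (V:=R_CompleteNormedModule) h 0 b (fun z _ => hcont z))).
Qed.

Lemma Pshift x : P (x + 2 * PI) - P x = P (2 * PI).
Proof.
  set (D := fun x => P (x + 2 * PI) - P x).
  assert (HD : forall y, is_derive D y 0).
  { intros y. unfold D.
    apply (is_derive_ext (fun x => P (x + 2 * PI) - P x)); [reflexivity|].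
    replace 0 with (h (y + 2 * PI) - h y) by (rewrite Hper; ring).
    apply (is_derive_minus (fun x => P (x + 2 * PI)) P).
    - apply (shift_derive P (2 * PI)), dP.
    - apply dP. }
  destruct (MVT_gen D 0 x (fun _ => 0)) as [c0 [_ Hc]].
  - intros; apply HD.
  - intros; apply (deriv_cont _ _ _ (HD x0)).
  - unfold D in Hc. unfold P in *. rewrite RInt_point in Hc.
    replace (0 + 2 * PI) with (2 * PI) in Hc by ring.
    change (zero : R) with 0 in Hc. lra.
Qed.

Definition A s := / INR k * lsum (seq 1 k) (fun j => P (s + theta k j) + h1 (s + theta k j)) - / 2 * w * s.

Lemma dA s : is_derive A s (G s).
Proof.
  set (SX := fun s => lsum (seq 1 k) (fun j => P (s + theta k j) + h1 (s + theta k j))).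
  assert (HS : is_derive SX s (lsum (seq 1 k) (fun j => rho (s + theta k j)))).
  { apply (d_sum _ (fun j s => P (s + theta k j) + h1 (s + theta k j))). intros j.
    apply (is_derive_plus (fun s => P (s + theta k j)) (fun s => h1 (s + theta k j)));
      apply shift_derive; [apply dP|apply dh1]. }
  apply (is_derive_ext (fun s => / INR k * SX s - / 2 * w * s)); [reflexivity|].
  clearbody SX. auto_derive; [exists (lsum (seq 1 k) (fun j => rho (s + theta k j))); exact HS|].
  change (Derive (fun x => SX x) s) with (Derive SX s).
  rewrite (is_derive_unique _ _ _ HS). unfold G. ring.
Qed.

Lemma lsum_const L a : lsum L (fun _ => a) = INR (length L) * a.
Proof.
  induction L as [|b L IH]; [unfold lsum; simpl; ring|].
  change (lsum (b :: L) (fun _ => a)) with (a + lsum L (fun _ => a)).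
  change (length (b :: L)) with (S (length L)). rewrite S_INR, IH. ring.
Qed.
Lemma lsum_minus L f g : lsum L f - lsum L g = lsum L (fun j => f j - g j).
Proof.
  induction L as [|b L IH]; [unfold lsum; simpl; ring|].
  change (f b + lsum L f - (g b + lsum L g) = f b - g b + lsum L (fun j => f j - g j)).
  rewrite <- IH. ring.
Qed.

Lemma A_per : A (2 * PI) = A 0.
Proof.
  apply Rminus_diag_uniq. unfold A.
  replace (/ INR k * lsum (seq 1 k) (fun j => P (2 * PI + theta k j) + h1 (2 * PI + theta k j)) -
     / 2 * w * (2 * PI) - (/ INR k * lsum (seq 1 k) (fun j => P (0 + theta k j) + h1 (0 + theta k j)) - / 2 * w * 0))
  with (/ INR k * (lsum (seq 1 k) (fun j => P (2 * PI + theta k j) + h1 (2 * PI + theta k j)) -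
     lsum (seq 1 k) (fun j => P (0 + theta k j) + h1 (0 + theta k j))) - w * PI) by (pose proof INRk_pos; field; lra).
  rewrite lsum_minus.
  rewrite (lsum_ext _ _ (fun _ => P (2 * PI))).
  - rewrite lsum_const, length_seq. unfold w, avg_width. fold (P (2 * PI)).
    pose proof INRk_pos. pose proof PI_RGT_0. field. lra.
  - intros j _. replace (2 * PI + theta k j) with (theta k j + 2 * PI) by ring.
    rewrite h1_per, Rplus_0_l. rewrite <- (Pshift (theta k j)). ring.
Qed.

Lemma exists_zero : exists s, 0 <= s < 2 * PI /\ G s = 0.
Proof.
  pose proof PI_RGT_0.
  destruct (MVT_gen A 0 (2 * PI) G) as [c0 [Hc1 Hc2]].
  - intros; apply dA.
  - intros; apply (deriv_cont _ _ _ (dA x)).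
  - rewrite A_per in Hc2. rewrite Rmin_left, Rmax_right in Hc1 by lra.
    assert (G c0 = 0) by nra.
    destruct (Req_dec c0 (2 * PI)) as [E|E].
    + exists 0. split; [lra|]. rewrite <- (G_perm k 0), kc. rewrite Rplus_0_l, <- E. auto.
    + exists c0. split; [lra|auto].
Qed.

Lemma find_m n s : 0 <= s < INR n * c -> exists m, (m < n)%nat /\ INR m * c <= s < INR (S m) * c.
Proof.
  induction n as [|n IH]; intros [H1 H2].
  - simpl in H2. lra.
  - destruct (Rlt_dec s (INR n * c)) as [L|L].
    + destruct IH as [m [Hm1 Hm2]]; [lra|]. exists m; split; [lia|auto].
    + exists n. split; [lia|lra].
Qed.

Definition F (l0 : list R) (m : nat) := map (fun s0 => s0 + INR m * c) l0.

Lemma F_range l0 m y : (forall s, In s l0 -> 0 <= s < c) -> In y (F l0 m) ->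
  INR m * c <= y < INR (S m) * c.
Proof.
  intros H Hy. unfold F in Hy. apply in_map_iff in Hy as [s0 [E Hs]].
  apply H in Hs. rewrite S_INR. lra.
Qed.

Lemma NoDup_F l0 n : NoDup l0 -> (forall s, In s l0 -> 0 <= s < c) ->
  NoDup (flat_map (F l0) (seq 0 n)).
Proof.
  intros Hnd Hr. pose proof c_pos.
  induction n as [|n IH]; [constructor|].
  rewrite seq_S, flat_map_app. simpl flat_map. rewrite app_nil_r.
  apply NoDup_app; auto.
  - apply NoDup_map_NoDup_ForallPairs; auto. intros a b _ _ E. lra.
  - intros y Hy1 Hy2. apply in_flat_map in Hy1 as [m [Hm Hy1]].
    apply in_seq in Hm.
    apply (F_range _ _ _ Hr) in Hy1. apply (F_range _ _ _ Hr) in Hy2.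
    assert (INR (S m) <= INR n) by (apply le_INR; lia).
    nra.
Qed.

Lemma count (l : list R) : NoDup l ->
  (forall s, In s l <-> (0 <= s < 2 * PI /\ G s = 0)) -> Nat.divide k (length l).
Proof.
  intros Hnd Hl. pose proof c_pos. pose proof PI_RGT_0.
  assert (ck : c <= 2 * PI).
  { rewrite <- kc. assert (1 <= INR k) by (apply (le_INR 1); lia). nra. }
  set (l0 := filter (fun s => if Rlt_dec s c then true else false) l).
  assert (Hl0 : forall s, In s l0 <-> In s l /\ s < c).
  { intros s. unfold l0. rewrite filter_In. destruct (Rlt_dec s c); split; intros [? ?]; auto; discriminate. }
  assert (Hr : forall s, In s l0 -> 0 <= s < c).
  { intros s Hs. apply Hl0 in Hs as [Hs ?]. apply Hl in Hs. lra. }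
  set (l' := flat_map (F l0) (seq 0 k)).
  assert (Hnd' : NoDup l') by (apply NoDup_F; auto; apply NoDup_filter; auto).
  assert (Len' : length l' = (k * length l0)%nat).
  { unfold l'. rewrite (flat_map_constant_length (c:=length l0)), length_seq; auto.
    intros; unfold F; apply length_map. }
  assert (I1 : incl l l').
  { intros s Hs. pose proof Hs as Hs'. apply Hl in Hs' as [Hs1 Hs2].
    destruct (find_m k s) as [m [Hm1 Hm2]]; [rewrite kc; lra|].
    apply in_flat_map. exists m. split; [apply in_seq; lia|].
    unfold F. apply in_map_iff. exists (s - INR m * c). split; [ring|].
    apply Hl0. rewrite S_INR in Hm2. split; [|lra]. apply Hl. split; [lra|].
    rewrite <- (G_perm m). replace (s - INR m * c + INR m * c) with s by ring. auto. }
  assert (I2 : incl l' l).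
  { intros y Hy. unfold l' in Hy. apply in_flat_map in Hy as [m [Hm Hy]].
    apply in_seq in Hm. pose proof (F_range _ _ _ Hr Hy) as Hry.
    unfold F in Hy. apply in_map_iff in Hy as [s0 [E Hs0]].
    apply Hl0 in Hs0 as [Hs0 _]. apply Hl in Hs0 as [Hs0 Gs0].
    apply Hl. split.
    - assert (INR (S m) <= INR k) by (apply le_INR; lia). rewrite <- kc. pose proof (pos_INR m). nra.
    - rewrite <- E, G_perm. auto. }
  exists (length l0). 
  pose proof (NoDup_incl_length Hnd I1). pose proof (NoDup_incl_length Hnd' I2). lia.
Qed.

End S.

Theorem proposition3p13 (h : R -> R) (k : nat)
  (Hsmooth : smooth h) (Hper : periodic_2pi h) (Hk : (2 < k)%nat) :
  (exists s : R, 0 <= s < 2 * PI /\ OPS_singular h k s) /\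
  (forall l : list R, NoDup l ->
     (forall s : R, In s l <-> (0 <= s < 2 * PI /\ OPS_singular h k s)) ->
     Nat.divide k (length l)).
Proof.
  split.
  - destruct (exists_zero h Hsmooth Hper k Hk) as [s [Hs Gs]].
    exists s. split; auto. apply sing_iff; auto.
  - intros l Hnd Hl. apply (count h Hsmooth Hper k Hk l Hnd).
    intros s. rewrite Hl. rewrite sing_iff; auto. tauto.
Qed.
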